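(* Let $\Sigma$ be a finite alphabet, $\mathcal F\subseteq\Sigma^{\Sigma^*}$ a base class and $T\in\mathbb N_+$. If $\Sigma=\{0,1\}$, then $\mathrm{VCdim}(\mathcal F^{\mathrm{e2e}(T)})\le6\,T\cdot\mathrm{VCdim}(\mathcal F)$. For non-binary finite $\Sigma$, $$\mathrm{Ndim}(\mathcal F^{\mathrm{e2e}(T)})\le9\,T\cdot\mathrm{Ndim}(\mathcal F)\log_2\!\left(\frac{2\,\mathrm{Ndim}(\mathcal F)\,|\Sigma|}{e\ln2}\right).$$
   Context: For $f:\Sigma^*\to\Sigma$, $\bar f(\mathbf x)$ is $\mathbf x$ with $f(\mathbf x)$ appended; $f^{\mathrm{CoT}(T)}=\bar f^{\circ T}$; $f^{\mathrm{e2e}(T)}(\mathbf x)$ is the last token of $f^{\mathrm{CoT}(T)}(\mathbf x)$; $\mathcal F^{\mathrm{e2e}(T)}=\{f^{\mathrm{e2e}(T)}:f\in\mathcal F\}$ (classes of functions on $\Sigma^*$). $\mathrm{VCdim}$ is the VC dimension. Natarajan dimension $\mathrm{Ndim}(\mathcal H)$: the largest size of a set $S$ for which there are $h_0,h_1$ with $h_0(\mathbf x)\ne h_1(\mathbf x)$ for all $\mathbf x\in S$ such that for every $U\subseteq S$ some $h\in\mathcal H$ agrees with $h_0$ on $U$ and with $h_1$ on $S\setminus U$. *)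

(* Defs.v *)
From mathcomp Require Import all_boot.
From Stdlib Require Export Reals.
Set Implicit Arguments. Unset Strict Implicit. Unset Printing Implicit Defensive.

Section CoT.
Variable Sigma : eqType.

Definition fbar (f : seq Sigma -> Sigma) (x : seq Sigma) : seq Sigma :=
  rcons x (f x).

Definition CoT (f : seq Sigma -> Sigma) (T : nat) : seq Sigma -> seq Sigma :=
  iter T (fbar f).

(* f^{e2e(T)}(x) = last token of f^{CoT(T)}(x)  (nonempty when T >= 1;
   the default value f x is never used then) *)
Definition e2e (f : seq Sigma -> Sigma) (T : nat) (x : seq Sigma) : Sigma :=
  last (f x) (CoT f T x).

Definition e2e_class (F : (seq Sigma -> Sigma) -> Prop) (T : nat)
  : (seq Sigma -> Sigma) -> Prop :=
  fun g => exists f, F f /\ g = e2e f T.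
End CoT.

Section Dims.
Variable X : eqType.

Definition VC_shatters (H : (X -> bool) -> Prop) (S : seq X) : Prop :=
  forall U : pred X, exists h, H h /\ forall x, x \in S -> h x = U x.

Definition VCdim_eq (H : (X -> bool) -> Prop) (d : nat) : Prop :=
  (exists S, uniq S /\ size S = d /\ VC_shatters H S) /\
  (forall S, uniq S -> VC_shatters H S -> (size S <= d)%N).

Definition VCdim_le (H : (X -> bool) -> Prop) (d : nat) : Prop :=
  forall S, uniq S -> VC_shatters H S -> (size S <= d)%N.

Variable Y : eqType.

Definition N_shatters (H : (X -> Y) -> Prop) (S : seq X) : Prop :=
  exists h0 h1 : X -> Y,
    (forall x, x \in S -> h0 x <> h1 x) /\
    forall U : pred X, exists h, H h /\
      (forall x, x \in S -> U x -> h x = h0 x) /\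
      (forall x, x \in S -> ~~ U x -> h x = h1 x).

Definition Ndim_eq (H : (X -> Y) -> Prop) (d : nat) : Prop :=
  (exists S, uniq S /\ size S = d /\ N_shatters H S) /\
  (forall S, uniq S -> N_shatters H S -> (size S <= d)%N).
End Dims.

Definition log2 (x : R) : R := (ln x / ln 2)%R.

(* Main.v *)
Require Import Defs.
From mathcomp Require Import all_boot.
From Stdlib Require Import Reals.
From Stdlib Require Import ClassicalEpsilon Lra Lia.
From mathcomp Require Import zify.
Set Implicit Arguments. Unset Strict Implicit. Unset Printing Implicit Defensive.


Fixpoint phi (K n : nat) {struct n} : nat -> nat := fun D =>
  match D with
  | 0 => 0
  | D'.+1 => match n with 0 => 1 | n'.+1 => phi K n' D'.+1 + K * phi K n' D' end
  end.

Lemma tuple_etaC (T : Type) n (t : n.+1.-tuple T) : t = cons_tuple (thead t) (behead_tuple t).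
Proof. by apply: val_inj; case: t => [[|x s] //=]. Qed.

Lemma tnthC0 (T : Type) n (x : T) (p : n.-tuple T) : tnth (cons_tuple x p) ord0 = x.
Proof. by rewrite (tnth_nth x). Qed.

Lemma tnthCS (T : Type) n (x : T) (p : n.-tuple T) (i : 'I_n) :
  tnth (cons_tuple x p) (lift ord0 i) = tnth p i.
Proof. by rewrite (tnth_nth x) (tnth_nth x p). Qed.

Lemma cons_tuple_inj (T : Type) n (x y : T) (p q : n.-tuple T) :
  cons_tuple x p = cons_tuple y q -> x = y /\ p = q.
Proof. move/(congr1 val) => /= [-> E]; split=> //; exact: val_inj. Qed.

Section Natarajan.
Variable Y : finType.

Definition Nsh n (A : {set n.-tuple Y}) (I : {set 'I_n}) : Prop :=
  exists h0 h1 : n.-tuple Y, (forall i, i \in I -> tnth h0 i <> tnth h1 i) /\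
   (forall U : {set 'I_n}, exists2 a, a \in A &
      forall i, i \in I -> tnth a i = (if i \in U then tnth h0 i else tnth h1 i)).

Definition npairs := #|[set ab : Y * Y | enum_rank ab.1 < enum_rank ab.2]|.

Lemma natarajan K (HK : npairs <= K) n : forall D (A : {set n.-tuple Y}),
  (forall I, Nsh A I -> #|I| < D) -> #|A| <= phi K n D.
Proof.
elim: n => [|n IH] D A HA.
  case: D HA => [|D] HA.
    case: (set_0Vmem A) => [-> | [a aA]]; first by rewrite cards0.
    have: Nsh A set0 by rewrite /Nsh; exists a, a; split=> [i|U]; [by rewrite in_set0 | by exists a => // i; rewrite in_set0].
    by move/HA.
  by apply: leq_trans (max_card _) _; rewrite card_tuple.
case: D HA => [|D] HA.
  case: (set_0Vmem A) => [-> | [a aA]]; first by rewrite cards0.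
  have: Nsh A set0 by rewrite /Nsh; exists a, a; split=> [i|U]; [by rewrite in_set0 | by exists a => // i; rewrite in_set0].
  by move/HA.
pose A' := [set (behead_tuple t : n.-tuple Y) | t : n.+1.-tuple Y in A].
pose Aab a b := [set p : n.-tuple Y | (cons_tuple a p \in A) && (cons_tuple b p \in A)].
have HA' : forall I, Nsh A' I -> #|I| < D.+1.
  move=> I [h0 [h1 [Hne Hsh]]].
  have [c _] : exists c : Y, true.
    have [p pA' _] := Hsh set0; case/imsetP: pA' => t tA _; by exists (thead t).
  rewrite -(card_imset I (@lift_inj _ ord0)); apply: HA.
  exists (cons_tuple c h0), (cons_tuple c h1); split.
    by move=> j /imsetP [i iI ->]; rewrite !tnthCS; exact: Hne.
  move=> U'; have [p pA' Hp] := Hsh [set i | lift ord0 i \in U'].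
  case/imsetP: pA' => t tA Ep; exists t => // j /imsetP [i iI ->].
  by rewrite (tuple_etaC t) !tnthCS -Ep Hp // inE.
have HAab : forall a b, a != b -> forall I, Nsh (Aab a b) I -> #|I| < D.
  move=> a b ab I [h0 [h1 [Hne Hsh]]].
  have : #|ord0 |: [set lift ord0 i | i in I]| < D.+1.
    apply: HA; exists (cons_tuple a h0), (cons_tuple b h1); split.
      move=> j; rewrite in_setU1 => /orP [/eqP -> | /imsetP [i iI ->]].
        by rewrite !tnthC0; exact/eqP.
      by rewrite !tnthCS; exact: Hne.
    move=> U'; have [p pA Hp] := Hsh [set i | lift ord0 i \in U'].
    rewrite inE in pA; case/andP: pA => pa pb.
    exists (if ord0 \in U' then cons_tuple a p else cons_tuple b p); first by case: ifP.
    move=> j; rewrite in_setU1 => /orP [/eqP -> | /imsetP [i iI ->]].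
      by case: ifP => _; rewrite !tnthC0.
    by case: ifP => _; rewrite !tnthCS Hp // inE.
  rewrite cardsU1 card_imset; last exact: lift_inj.
  have -> : ord0 \notin [set lift ord0 i | i in I].
    apply/negP => /imsetP [i _ E]; move: (neq_lift ord0 i); by rewrite -E eqxx.
  by [].
pose cmin (p : n.-tuple Y) (c0 : Y) := [arg min_(c < c0 | cons_tuple c p \in A) enum_rank c].
have cminP p c0 : cons_tuple c0 p \in A -> (cons_tuple (cmin p c0) p \in A) /\
    forall c, cons_tuple c p \in A -> enum_rank (cmin p c0) <= enum_rank c.
  by move=> P0; rewrite /cmin; case: arg_minnP => // c Pc Hmin; split.
have cmin_uniq p c0 c1 : cons_tuple c0 p \in A -> cons_tuple c1 p \in A -> cmin p c0 = cmin p c1.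
  move=> P0 P1; have [Q0 M0] := cminP p c0 P0; have [Q1 M1] := cminP p c1 P1.
  by apply: enum_rank_inj; apply/val_inj/eqP; rewrite eqn_leq M0 ?M1.
pose G := [set t : n.+1.-tuple Y | t == cons_tuple (cmin (behead_tuple t) (thead t)) (behead_tuple t)].
have P1 : #|A :&: G| <= #|A'|.
  rewrite -(card_in_imset (f := fun t : n.+1.-tuple Y => (behead_tuple t : n.-tuple Y))).
    by apply: subset_leq_card; apply: imsetS; apply: subsetIl.
  move=> t t' /setIP [tA tG] /setIP [t'A t'G] /= E.
  rewrite inE in tG; rewrite inE in t'G.
  rewrite (eqP tG) (eqP t'G) E; congr cons_tuple; apply: cmin_uniq.
    by rewrite -E -tuple_etaC.
  by rewrite -tuple_etaC.
pose Triples := [set x : (Y * Y) * n.-tuple Y |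
   (enum_rank x.1.1 < enum_rank x.1.2) && (x.2 \in Aab x.1.1 x.1.2)].
have P2 : #|A :\: G| <= #|Triples|.
  pose f (t : n.+1.-tuple Y) := ((cmin (behead_tuple t) (thead t), thead t), (behead_tuple t : n.-tuple Y)).
  have finj : injective f.
    move=> t t' E.
    have E1 : thead t = thead t' := congr1 (fun x => x.1.2) E.
    have E2 : behead_tuple t = behead_tuple t' := congr1 (fun x => x.2) E.
    by rewrite (tuple_etaC t) (tuple_etaC t') E1 E2.
  rewrite -(card_imset (A :\: G) finj); apply: subset_leq_card; apply/subsetP => x.
  case/imsetP => t /setDP [tA tG] ->.
  have P0 : cons_tuple (thead t) (behead_tuple t) \in A by rewrite -tuple_etaC.
  have [Q0 M0] := cminP _ _ P0.
  rewrite !inE /= Q0 P0 andbT ltn_neqAle M0 // andbT.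
  rewrite andbT; apply/negP => /eqP E; move/negP: tG; apply; rewrite inE.
  have E' : cmin (behead_tuple t) (thead t) = thead t by apply: enum_rank_inj; exact: val_inj.
  by rewrite E' -tuple_etaC.
have P3 : #|Triples| <= K * phi K n D.
  rewrite -sum1_card.
  rewrite (eq_bigl (fun x : (Y * Y) * n.-tuple Y => (enum_rank x.1.1 < enum_rank x.1.2) && (x.2 \in Aab x.1.1 x.1.2))); last by move=> x; rewrite inE.
  rewrite -(pair_big_dep (fun ab : Y * Y => enum_rank ab.1 < enum_rank ab.2) (fun ab p => p \in Aab ab.1 ab.2) (fun _ _ => 1)) /=.
  apply: (@leq_trans (\sum_(ab : Y * Y | enum_rank ab.1 < enum_rank ab.2) phi K n D)).
    apply: leq_sum => ab Hab; rewrite sum1_card; apply: IH.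
    apply: HAab; apply: contraTneq Hab => ->; by rewrite ltnn.
  rewrite (eq_bigl (fun ab => ab \in [set ab : Y * Y | enum_rank ab.1 < enum_rank ab.2])); last by move=> ab; rewrite inE.
  by rewrite sum_nat_const leq_mul2r HK orbT.
rewrite -(cardsID G A) /=.
apply: leq_add; first by apply: leq_trans P1 _; exact: IH.
exact: leq_trans P2 P3.
Qed.
End Natarajan.


Definition pb (P : Prop) : bool := if excluded_middle_informative P then true else false.
Lemma pbP (P : Prop) : reflect P (pb P).
Proof. by rewrite /pb; case: excluded_middle_informative => h; constructor. Qed.

Section Core.
Variable Sigma : finType.

Fixpoint Wle (j : nat) : seq (seq Sigma) :=
  if j is j'.+1 then [::] :: [seq rcons w c | w <- Wle j', c <- enum Sigma] else [:: [::]].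

Lemma Wle_mem j w : size w <= j -> w \in Wle j.
Proof.
elim: j w => [|j IH] w.
  by rewrite leqn0 size_eq0 => /eqP ->; rewrite inE.
case/lastP: w => [|w c]; first by rewrite inE.
rewrite size_rcons ltnS => hw; rewrite inE; apply/orP; right.
by apply: allpairs_f; [exact: IH | rewrite mem_enum].
Qed.

Lemma size_Wle j : 1 < #|Sigma| -> (size (Wle j)).+1 <= expn #|Sigma| j.+1.
Proof.
move=> k2; elim: j => [|j IH] /=; first by rewrite expn1.
rewrite size_allpairs -cardE expnS.
have := IH; move: (size (Wle j)) (expn #|Sigma| j.+1) => s e h.
by apply: leq_trans (_ : #|Sigma| * s.+1 <= _); [rewrite mulnS [s * _]mulnC addnC -[(_ * _).+1]addn1 ltn_add2l | rewrite leq_mul2l h orbT].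
Qed.

Lemma CoT_agree (f g : seq Sigma -> Sigma) T' x :
  (forall w, size w <= T' -> f (x ++ w) = g (x ++ w)) ->
  forall t, t <= T' -> CoT f t x = CoT g t x /\ exists w, CoT f t x = x ++ w /\ size w = t.
Proof.
move=> H; elim=> [|t IH] ht.
  by split=> //; exists [::]; rewrite cats0.
have [E [w [Ew sw]]] := IH (ltnW ht).
rewrite /CoT /= -!/(CoT _ _ _) /fbar -E Ew H; last by rewrite sw ltnW.
split=> //; exists (rcons w (g (x ++ w))); by rewrite rcons_cat size_rcons sw.
Qed.

Lemma e2e_agree (f g : seq Sigma -> Sigma) T' x :
  (forall w, size w <= T' -> f (x ++ w) = g (x ++ w)) ->
  e2e f T'.+1 x = e2e g T'.+1 x.
Proof.
move=> H; have [E [w [Ew sw]]] := CoT_agree H (leqnn T').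
rewrite /e2e /CoT /= -!/(CoT _ _ _) /fbar !last_rcons -E Ew H //; by rewrite sw.
Qed.

Lemma core (F : (seq Sigma -> Sigma) -> Prop) T' d (y0 : Sigma) K :
  npairs Sigma <= K -> 1 < #|Sigma| ->
  (forall S, uniq S -> N_shatters F S -> size S <= d) ->
  forall S, uniq S -> N_shatters (e2e_class F T'.+1) S ->
  exists n, n <= size S * expn #|Sigma| T'.+1 /\ expn 2 (size S) <= phi K n d.+1.
Proof.
move=> HK k2 HF S Su [g0 [g1 [Hgne Hg]]].
set m := size S.
pose Q := undup [seq x ++ w | x <- S, w <- Wle T'].
have Qu : uniq Q by apply: undup_uniq.
pose n := size Q.
exists n; split.
  apply: leq_trans (size_undup _) _; rewrite size_allpairs leq_mul2l; apply/orP; right.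
  exact: ltnW (size_Wle T' k2).
pose Qt := in_tuple Q.
pose pat (f : seq Sigma -> Sigma) : n.-tuple Sigma := map_tuple f Qt.
pose A := [set t : n.-tuple Sigma | pb (exists f, F f /\ t = pat f)].
pose St := in_tuple S.
pose B := [set s : m.-tuple Sigma | pb (exists g, e2e_class F T'.+1 g /\ s = map_tuple g St)].
have idx : forall i : 'I_n, index (tnth Qt i) Q = i.
  by move=> i; rewrite (tnth_nth [::]) index_uniq.
have HA : #|A| <= phi K n d.+1.
  apply: (natarajan HK) => I [h0 [h1 [Hne Hsh]]].
  pose S' := [seq tnth Qt i | i <- enum I].
  have S'u : uniq S'.
    rewrite map_inj_uniq ?enum_uniq // => i j E.
    by apply: val_inj; rewrite /= -(idx i) -(idx j) E.
  have sS' : size S' = #|I| by rewrite size_map -cardE.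
  rewrite ltnS -sS'; apply: (HF S'); first exact: S'u.
  exists (fun z => nth y0 h0 (index z Q)), (fun z => nth y0 h1 (index z Q)); split.
    move=> z /mapP [i]; rewrite mem_enum => iI ->.
    by rewrite idx -!tnth_nth; exact: Hne.
  move=> U; have [a aA Ha] := Hsh [set i | U (tnth Qt i)].
  rewrite inE in aA; case/pbP: aA => f [Ff Ea].
  exists f; split=> //; split=> z /mapP [i]; rewrite mem_enum => iI -> Uz;
    have := Ha i iI; rewrite Ea tnth_map inE ?Uz ?(negbTE Uz) /= idx -tnth_nth => ->; by [].
have HB : #|B| <= #|A|.
  pose Psi (t : n.-tuple Sigma) : m.-tuple Sigma :=
    map_tuple (e2e (fun z => nth y0 t (index z Q)) T'.+1) St.
  apply: leq_trans (leq_imset_card Psi A); apply: subset_leq_card; apply/subsetP => s.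
  rewrite inE => /pbP [g [[f [Ff ->]] ->]].
  apply/imsetP; exists (pat f); first by rewrite inE; apply/pbP; exists f.
  apply: eq_from_tnth => i; rewrite !tnth_map; apply: e2e_agree => w sw.
  have zQ : tnth St i ++ w \in Q.
    by rewrite mem_undup; apply: allpairs_f; [exact: mem_tnth | exact: Wle_mem].
  by rewrite /= (nth_map [::]) ?index_mem // nth_index.
have HS : expn 2 m <= #|B|.
  pose sU (U : {set 'I_m}) : m.-tuple Sigma :=
    [tuple (if i \in U then g0 (tnth St i) else g1 (tnth St i)) | i < m].
  have sUinj : injective sU.
    move=> U V E; apply/setP => i; have := congr1 (fun s => tnth s i) E.
    rewrite /sU !tnth_mktuple; have Hi := Hgne _ (mem_tnth i St).
    by case: (i \in U); case: (i \in V) => // E'; exfalso; apply: Hi; rewrite E'.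
  have Sidx : forall i j : 'I_m, (tnth St j == tnth St i) = (j == i).
    move=> i j; rewrite !(tnth_nth [::]) nth_uniq //.
  rewrite -{1}(card_ord m) -cardsT -card_powerset -(card_imset _ sUinj).
  apply: subset_leq_card; apply/subsetP => s /imsetP [U _ ->].
  rewrite inE; apply/pbP.
  have [g [Hcl [H0 H1]]] := Hg (fun x => [exists j in U, tnth St j == x]).
  exists g; split=> //; apply: eq_from_tnth => i; rewrite /sU tnth_mktuple tnth_map.
  have Hx : [exists j in U, tnth St j == tnth St i] = (i \in U).
    apply/existsP/idP => [[j /andP [jU]]|iU]; first by rewrite Sidx => /eqP <-.
    by exists i; rewrite iU eqxx.
  case: ifP => iU.
    by rewrite H0 ?mem_tnth // Hx.
  by rewrite H1 ?mem_tnth // Hx iU.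
by apply: leq_trans HS (leq_trans HB HA).
Qed.
End Core.

Unset Implicit Arguments.
Section RealPart.
Local Open Scope R_scope.

Lemma phi1 K n : phi K n 1%nat = 1%nat.
Proof. elim: n => //= n IH; rewrite IH; case: n {IH} => [|n] /=; by rewrite muln0 addn0. Qed.

Lemma INR_addn a b : INR (a + b)%nat = INR a + INR b.
Proof. exact: plus_INR. Qed.
Lemma INR_muln a b : INR (a * b)%nat = INR a * INR b.
Proof. exact: mult_INR. Qed.
Lemma INR_expn a b : INR (expn a b) = INR a ^ b.
Proof. elim: b => [|b IH]; first by []. by rewrite expnS INR_muln IH. Qed.

Lemma phi_bound K (x : R) : 0 < x -> x <= 1 -> forall n D,
  INR (phi K n D.+1) * x ^ D <= (1 + INR K * x) ^ n.
Proof.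
move=> x0 x1; have K0 : 0 <= INR K by apply: pos_INR.
have Kx : 0 <= INR K * x by apply: Rmult_le_pos; lra.
elim=> [|n IH] D.
  rewrite /= Rmult_1_l; have := pow_incr x 1 D; rewrite pow1; apply; lra.
have P0 : 0 <= (1 + INR K * x) ^ n by apply: pow_le; lra.
case: D => [|D].
  have := IH 0%nat; rewrite !phi1 /= !Rmult_1_r => H; nra.
have H1 := IH D.+1; have H2 := IH D.
change (phi K n.+1 D.+2) with (phi K n D.+2 + K * phi K n D.+1)%nat.
rewrite INR_addn INR_muln /=.
have -> : (INR (phi K n D.+2) + INR K * INR (phi K n D.+1)) * (x * x ^ D) =
  INR (phi K n D.+2) * x ^ D.+1 + (INR K * x) * (INR (phi K n D.+1) * x ^ D) by simpl; ring.
have : (INR K * x) * (INR (phi K n D.+1) * x ^ D) <= (INR K * x) * (1 + INR K * x) ^ n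
  by apply: Rmult_le_compat_l.
nra.
Qed.

Lemma ln_le x y : 0 < x -> x <= y -> ln x <= ln y.
Proof. move=> x0 [xy|<-]; [left; exact: ln_increasing | lra]. Qed.

Lemma ln_le_sub1 x : 0 < x -> ln x <= x - 1.
Proof. move=> x0; have := exp_ineq1_le (ln x); rewrite exp_ln //; lra. Qed.

Lemma count_to_log (m d N K n : nat) : (expn 2 m <= phi K n d.+1)%nat -> (n <= N)%nat ->
  (1 <= K)%nat -> (1 <= d)%nat -> (d <= K * N)%nat ->
  INR m * ln 2 <= INR d * (1 + ln (INR K * INR N) - ln (INR d)).
Proof.
move=> H2 nN K1 d1 dKN.
have Kp : 0 < INR K by apply: lt_0_INR; apply/ltP.
have dp : 0 < INR d by apply: lt_0_INR; apply/ltP.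
have Np : 0 < INR N.
  apply: lt_0_INR; apply/ltP; case: N dKN nN => //; rewrite muln0 leqn0 => /eqP E; by move: d1; rewrite E.
have dle : INR d <= INR K * INR N by rewrite -INR_muln; apply: le_INR; apply/leP.
pose x := INR d / (INR K * INR N).
have KNp : 0 < INR K * INR N by apply: Rmult_lt_0_compat.
have x0 : 0 < x by apply: Rdiv_lt_0_compat.
have xKN : x * (INR K * INR N) = INR d by rewrite /x; field; lra.
have x1 : x <= 1 by nra.
have Hb := phi_bound K x x0 x1 n d.
have Kx0 : 0 <= INR K * x by apply: Rmult_le_pos; lra.
have HN : (1 + INR K * x) ^ n <= (1 + INR K * x) ^ N by apply: Rle_pow; [lra | apply/leP].
have P2 : 0 < INR (expn 2 m) by rewrite INR_expn; apply: pow_lt; simpl; lra.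
have Pphi : INR (expn 2 m) <= INR (phi K n d.+1) by apply: le_INR; apply/leP.
have xd : 0 < x ^ d by apply: pow_lt.
have L1 : ln (INR (phi K n d.+1) * x ^ d) <= ln ((1 + INR K * x) ^ N).
  apply: ln_le; last lra; apply: Rmult_lt_0_compat => //; lra.
rewrite ln_mult ?ln_pow // in L1; try lra.
have L2 : ln (INR (expn 2 m)) <= ln (INR (phi K n d.+1)) by apply: ln_le.
rewrite INR_expn ln_pow in L2; last (simpl; lra).
have L3 : ln (1 + INR K * x) <= INR K * x.
  have := ln_le_sub1 (1 + INR K * x); lra.
have L4 : ln x = ln (INR d) - ln (INR K * INR N).
  rewrite /x /Rdiv ln_mult ?ln_Rinv //; try lra; apply: Rinv_0_lt_compat; lra.
have L5 : INR N * (INR K * x) = INR d by rewrite -xKN; ring.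
have L6 : INR N * ln (1 + INR K * x) <= INR d.
  rewrite -L5; apply: Rmult_le_compat_l => //; lra.
rewrite L4 in L1.
have I2 : INR 2 = 2 by simpl; ring.
rewrite I2 in L2.
have E : INR d * (1 + ln (INR K * INR N) - ln (INR d)) = INR d - INR d * (ln (INR d) - ln (INR K * INR N)) by ring.
rewrite E; lra.
Qed.

Lemma ln2_gt : / 2 < ln 2.
Proof. exact: ln_lt_2. Qed.

Lemma ln2_le1 : ln 2 <= 1.
Proof.
have H := exp_ineq1_le 1.
have : ln 2 <= ln (exp 1) by apply: ln_le; lra.
by rewrite ln_exp.
Qed.

Lemma key_ln (m d : R) : 0 < m -> 0 < d -> d * (1 + ln m - ln d) <= m / 4 + 2 * d * ln 2.
Proof.
move=> m0 d0.
have q0 : 0 < m / (4 * d) by apply: Rdiv_lt_0_compat; lra.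
have H := ln_le_sub1 (m / (4 * d)) q0.
have E : ln (m / (4 * d)) = ln m - 2 * ln 2 - ln d.
  rewrite /Rdiv ln_mult ?ln_Rinv; try lra; last by apply: Rinv_0_lt_compat; lra.
  rewrite ln_mult; try lra.
  have -> : 4 = 2 * 2 by ring.
  rewrite ln_mult; lra.
rewrite E in H.
have E2 : m / (4 * d) * d = m / 4 by field; lra.
have : d * (1 + ln m - ln d) <= d * (m / (4 * d) + 2 * ln 2).
  apply: Rmult_le_compat_l; lra.
have -> : d * (m / (4 * d) + 2 * ln 2) = m / 4 + 2 * d * ln 2 by field; lra.
by [].
Qed.

Lemma INR_pos (a : nat) : (1 <= a)%nat -> 0 < INR a.
Proof. move=> h; apply: lt_0_INR; exact/ltP. Qed.

Lemma bin_final (m d T : nat) : (1 <= T)%nat -> (1 <= d)%nat -> (1 <= m)%nat ->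
  INR m * ln 2 <= INR d * (1 + ln (INR 1 * INR (m * expn 2 T)) - ln (INR d)) ->
  (m <= 6 * T * d)%nat.
Proof.
move=> T1 d1 m1 H.
have mp := INR_pos _ m1; have dp := INR_pos _ d1; have Tp := INR_pos _ T1.
have T1' : 1 <= INR T by apply: (le_INR 1 T); apply/leP.
have u1 := ln2_gt; have u2 := ln2_le1.
rewrite INR_muln INR_expn Rmult_1_l ln_mult in H; try (apply: pow_lt; simpl; lra); last lra.
rewrite ln_pow /= in H; last lra.
try replace (1 + 1) with 2 in H by ring.
have K := key_ln _ _ mp dp.
have H' : INR m * (ln 2 - / 4) <= INR d * ln 2 * (INR T + 2) by nra.
have H'' : INR d * ln 2 * (INR T + 2) <= INR (6 * T * d) * (ln 2 - / 4).
  rewrite !INR_muln.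
  have : 0 <= INR d * ((ln 2 - / 2) * (5 * INR T - 2) + (INR T - 1)) by
    apply: Rmult_le_pos; [lra | nra].
  replace (INR 6) with 6 by (simpl; ring). nra.
apply/leP; apply: INR_le.
apply: (Rmult_le_reg_r (ln 2 - / 4)); lra.
Qed.

Lemma nat_final (m d T k : nat) : (1 <= T)%nat -> (1 <= d)%nat -> (1 <= m)%nat -> (3 <= k)%nat ->
  INR m * ln 2 <= INR d * (1 + ln (INR (k * k) * INR (m * expn k T)) - ln (INR d)) ->
  INR m <= 9 * INR T * INR d * log2 (2 * INR d * INR k / (exp 1 * ln 2)).
Proof.
move=> T1 d1 m1 k3 H.
have mp := INR_pos _ m1; have dp := INR_pos _ d1; have Tp := INR_pos _ T1.
have k1 : (1 <= k)%nat by apply: leq_trans k3.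
have kp := INR_pos _ k1.
have T1' : 1 <= INR T by apply: (le_INR 1 T); apply/leP.
have d1' : 1 <= INR d by apply: (le_INR 1 d); apply/leP.
have k3' : 3 <= INR k by have := le_INR 3 k ltac:(apply/leP; exact: k3); simpl; lra.
have u1 := ln2_gt; have u2 := ln2_le1.
have L1 : 1 <= ln (INR k).
  rewrite -(ln_exp 1); apply: ln_le; [apply: exp_pos | have := exp_le_3; lra].
have kkp : 0 < INR k * INR k by nra.
have kTp : 0 < INR k ^ T by apply: pow_lt; lra.
have E : ln (INR k * INR k * (INR m * INR k ^ T)) = 2 * ln (INR k) + ln (INR m) + INR T * ln (INR k).
  rewrite ln_mult //; last nra.
  rewrite ln_mult // ln_mult // ln_pow //; ring.
rewrite !INR_muln INR_expn E in H.
have K := key_ln _ _ mp dp.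
set u := ln 2 in H K u1 u2 *; set L := ln (INR k) in H L1 *.
have H' : INR m * (u - / 4) <= INR d * (2 * u + L * (INR T + 2)) by nra.
have up : 0 < u by lra.
have eu : exp 1 * u <= 2.
  have h := ln_le_sub1 u up.
  have h2 : u <= exp (u - 1).
    rewrite -{1}(exp_ln u up); case: h => [h|->]; [left; exact: exp_increasing | lra].
  have : exp (u - 1) = 2 * / exp 1.
    by rewrite /Rminus exp_plus exp_Ropp /u exp_ln //; lra.
  have e0 := exp_pos 1.
  move=> E1; rewrite E1 in h2.
  have : exp 1 * u <= exp 1 * (2 * / exp 1) by apply: Rmult_le_compat_l; lra.
  have -> : exp 1 * (2 * / exp 1) = 2 by field; lra.
  by [].
have e0 := exp_pos 1.
have eup : 0 < exp 1 * u by apply: Rmult_lt_0_compat.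
have zk : INR k <= 2 * INR d * INR k / (exp 1 * u).
  apply: (Rmult_le_reg_r (exp 1 * u)) => //.
  have -> : 2 * INR d * INR k / (exp 1 * u) * (exp 1 * u) = 2 * INR d * INR k by field; lra.
  nra.
have Lz : L <= ln (2 * INR d * INR k / (exp 1 * u)) by apply: ln_le.
have Lg : L / u <= log2 (2 * INR d * INR k / (exp 1 * u)).
  rewrite /log2 -/u; apply: Rmult_le_compat_r => //; left; exact: Rinv_0_lt_compat.
have P : u * (2 * u + L * (INR T + 2)) <= 9 * INR T * L * (u - / 4).
  have h1 : 0 <= (u - / 2) * (1 - u) by nra.
  have h2 : 0 <= (L - 1) * (8 * INR T * u - 2 * u - 9 * INR T / 4).
    apply: Rmult_le_pos; nra.
  nra.
have Q : INR m * u <= 9 * INR T * INR d * L.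
  apply: (Rmult_le_reg_r (u - / 4)); first lra.
  have : INR m * (u - / 4) * u <= INR d * (2 * u + L * (INR T + 2)) * u by apply: Rmult_le_compat_r; lra.
  have : INR d * (u * (2 * u + L * (INR T + 2))) <= INR d * (9 * INR T * L * (u - / 4)) by apply: Rmult_le_compat_l; lra.
  nra.
have Q' : INR m <= 9 * INR T * INR d * (L / u).
  apply: (Rmult_le_reg_r u) => //.
  have -> : 9 * INR T * INR d * (L / u) * u = 9 * INR T * INR d * L by field; lra.
  by [].
apply: Rle_trans Q' _; apply: Rmult_le_compat_l => //; nra.
Qed.

Lemma log2_ge1 d k : (1 <= d)%nat -> (3 <= k)%nat -> 1 <= log2 (2 * INR d * INR k / (exp 1 * ln 2)).
Proof.
move=> d1 k3.
have d1' : 1 <= INR d by apply: (le_INR 1 d); apply/leP.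
have k3' : 3 <= INR k by have := le_INR 3 k ltac:(apply/leP; exact: k3); simpl; lra.
have u1 := ln2_gt; have u2 := ln2_le1.
have e3 := exp_le_3; have e0 := exp_pos 1.
have eup : 0 < exp 1 * ln 2 by apply: Rmult_lt_0_compat; lra.
have eu3 : exp 1 * ln 2 <= 3 by nra.
have z2 : 2 <= 2 * INR d * INR k / (exp 1 * ln 2).
  apply: (Rmult_le_reg_r (exp 1 * ln 2)) => //.
  have -> : 2 * INR d * INR k / (exp 1 * ln 2) * (exp 1 * ln 2) = 2 * INR d * INR k by field; lra.
  nra.
have : ln 2 <= ln (2 * INR d * INR k / (exp 1 * ln 2)) by apply: ln_le; lra.
rewrite /log2 => h.
apply: (Rmult_le_reg_r (ln 2)); first lra.
have -> : ln (2 * INR d * INR k / (exp 1 * ln 2)) / ln 2 * ln 2 = ln (2 * INR d * INR k / (exp 1 * ln 2)) by field; lra.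
lra.
Qed.

End RealPart.

Lemma npairs_bool : (npairs bool <= 1)%N.
Proof.
rewrite /npairs; set P := [set ab : bool * bool | _].
have nP : forall a b, (a, b) \in P -> (b, a) \in P -> False.
  by move=> a b; rewrite !inE /= => h1 h2; have := ltn_trans h1 h2; rewrite ltnn.
have dP : forall a, (a, a) \in P -> False by move=> a; rewrite inE ltnn.
case: (boolP ((true, false) \in P)) => h.
  rewrite -(cards1 (true, false)); apply: subset_leq_card; apply/subsetP => -[[] []] hx;
    rewrite inE //; [exfalso; exact: dP hx | exfalso; exact: nP hx h | exfalso; exact: dP hx].
rewrite -(cards1 (false, true)); apply: subset_leq_card; apply/subsetP => -[[] []] hx;
  rewrite inE //; [exfalso; exact: dP hx | by rewrite hx in h | exfalso; exact: dP hx].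
Qed.

Theorem theoremB1 :
  (* binary alphabet Sigma = {0,1} *)
  (forall (F : (seq bool -> bool) -> Prop) (T d : nat),
      (0 < T)%N ->
      VCdim_eq F d ->
      VCdim_le (e2e_class F T) (6 * T * d))
  /\
  (* non-binary finite alphabet *)
  (forall (Sigma : finType) (F : (seq Sigma -> Sigma) -> Prop) (T d : nat),
      (0 < T)%N ->
      (2 < #|Sigma|)%N ->
      Ndim_eq F d ->
      forall S : seq (seq Sigma), uniq S -> N_shatters (e2e_class F T) S ->
        (INR (size S) <=
           9 * INR T * INR d *
           log2 (2 * INR d * INR #|Sigma| / (exp 1 * ln 2)))%R).
Proof.
split.
  move=> F [|T'] d // _ [_ Hd] S Su HS.
  have HF : forall S, uniq S -> N_shatters F S -> (size S <= d)%N.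
    move=> S0 S0u [h0 [h1 [Hne Hsh]]]; apply: (Hd S0); first exact: S0u.
    move=> U.
    have [h [Fh [H0 H1]]] := Hsh (fun x => U x == h0 x).
    exists h; split=> // x xS; case E: (U x == h0 x).
      by rewrite H0 ?E // (eqP E).
    rewrite H1 ?E //; have := Hne x xS; move: E; case: (U x); case: (h0 x); case: (h1 x) => //.
  have HS' : N_shatters (e2e_class F T'.+1) S.
    exists (fun _ => true), (fun _ => false); split=> // U.
    have [h [Hh E]] := HS U; exists h; split=> //; split=> x xS Ux; rewrite E //.
    by apply/negbTE.
  have [n [Hn H2]] := core (T' := T') false npairs_bool ltac:(by rewrite card_bool) HF Su HS'.
  rewrite card_bool in Hn.
  set m := size S in Hn H2 *.
  case: (leqP m d) => [md | dm].
    apply: leq_trans md _; nia.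
  have d1 : (1 <= d)%N.
    case: d dm H2 {HF Hd} => // dm; rewrite phi1 => h.
    have : (expn 2 m <= expn 2 0)%N by [].
    by rewrite leq_exp2l // leqn0 => /eqP m0; rewrite m0 in dm.
  have m1 : (1 <= m)%N by apply: leq_trans dm.
  apply: (bin_final m d T'.+1) => //.
  apply: (count_to_log m d (m * expn 2 T'.+1) 1 n) => //.
  rewrite mul1n; apply: leq_trans (ltnW dm) _; rewrite leq_pmulr // expn_gt0 //.
move=> Sigma F [|T'] d // _ k2 [_ Hd] S Su HS.
have /card_gt0P [y0 _] : (0 < #|Sigma|)%N by apply: leq_trans k2.
have HK : (npairs Sigma <= #|Sigma| * #|Sigma|)%N by rewrite /npairs -card_prod; apply: max_card.
have [n [Hn H2]] := core (T' := T') y0 HK (ltnW k2) Hd Su HS.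
set m := size S in Hn H2 *; set k := #|Sigma| in Hn H2 HK k2 *.
case: d Hd H2 => [|d] Hd H2.
  rewrite phi1 in H2.
  have : (expn 2 m <= expn 2 0)%N by [].
  rewrite leq_exp2l // leqn0 => /eqP ->; rewrite /= !Rmult_0_r Rmult_0_l; lra.
case: (leqP m d.+1) => [md | dm].
  have h1 := log2_ge1 d.+1 k ltac:(by []) k2.
  have h2 : (INR m <= INR d.+1)%R by apply: le_INR; apply/leP.
  have h3 : (1 <= INR T'.+1)%R by apply: (le_INR 1); apply/leP.
  have h4 : (0 <= INR d.+1)%R by apply: pos_INR.
  have h5 : (INR d.+1 <= 9 * INR T'.+1 * INR d.+1)%R by nra.
  move: h1 h5; set L := log2 _; set a := (9 * INR T'.+1 * INR d.+1)%R => h1 h5.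
  nra.
have m1 : (1 <= m)%N by apply: leq_trans dm.
apply: (nat_final m d.+1 T'.+1 k) => //.
apply: (count_to_log m d.+1 (m * expn k T'.+1) (k * k) n) => //.
  by rewrite muln_gt0; apply/andP; split; apply: leq_trans k2.
apply: leq_trans (ltnW dm) _.
have kp : (0 < k)%N by apply: leq_trans k2.
rewrite mulnC -mulnA leq_pmulr // muln_gt0 expn_gt0 kp // muln_gt0 kp //.
Qed.
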